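(* Let $\Omega=[\alpha,\beta]$ with $\alpha<\beta$, let $F$ be an $\Omega$-tropical polynomial with set of non-smooth points $H\subset(\alpha,\beta)$ and multiplicity function $\mu$, let $p\in(\alpha,\beta)\setminus H$, and let $(a,b)$ be the connected component of $(\alpha,\beta)\setminus H$ containing $p$ (so each of $a,b$ is either a point of $H$ or an endpoint of $\Omega$). Put $c=\min(p-a,\,b-p)$. Then $G_pF$ is an $\Omega$-tropical polynomial, and its multiset of non-smooth points (points counted with multiplicity) is obtained from that of $F$ by removing one copy of $a$ if $a\neq\alpha$, removing one copy of $b$ if $b\neq\beta$, and adding one copy of $a+c$ and one copy of $b-c$ (so that if $a+c=b-c$, i.e. $p=(a+b)/2$, a point $p$ of multiplicity $2$ is added). Equivalently, with $M_F:\Omega\to\mathbb{Z}_{\ge0}\cup\{\infty\}$ defined by $M_F(\alpha)=M_F(\beta)=\infty$, $M_F=\mu$ on $H$ and $M_F=0$ on $(\alpha,\beta)\setminus H$, one has $M_{G_pF}(x)=M_F(x)-\delta_{a,x}-\delta_{b,x}+\delta_{a+c,x}+\delta_{b-c,x}$ for all $x\in\Omega$ (Kronecker deltas, with $\infty-1=\infty$).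
   Context: Let $\Omega=[\alpha,\beta]$ be a compact interval with $\alpha<\beta$. An $\Omega$-tropical series is a function $F:\Omega\to[0,\infty)$ with $F(\alpha)=F(\beta)=0$ that can be written as $F(z)=\inf_{v\in\mathbb{Z}}(a_v+zv)$ for some real numbers $a_v$; its canonical coefficients are $a_v=\sup_{z\in\Omega}(F(z)-zv)$. Such $F$ is concave piecewise linear with integer slopes; its set $H$ of non-smooth points is the set of points of $(\alpha,\beta)$ where $F$ is not differentiable, with multiplicity $\mu(h)=F'(h^-)-F'(h^+)\in\mathbb{Z}_{\ge1}$. An $\Omega$-tropical polynomial is an $\Omega$-tropical series with finite $H$. For $p\in(\alpha,\beta)$ the operator $G_p$ is defined as follows: if $F$ is not differentiable at $p$, then $G_pF=F$; otherwise there is a unique $w\in\mathbb{Z}$ with $F(z)=a_w+zw$ near $p$ ($a_v$ canonical coefficients of $F$), and $G_pF(z)=\inf_{v\in\mathbb{Z}}(b_v+zv)$ for $z\in\Omega$, where $b_v=a_v$ for $v\neq w$ and $b_w=\min_{v\in\mathbb{Z}\setminus\{w\}}(a_v+pv)-pw$. *)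

(* Defs.v *)
From HB Require Import structures.
From mathcomp Require Import all_boot all_order all_algebra.
From mathcomp Require Import all_classical all_reals all_analysis.
Set Implicit Arguments. Unset Strict Implicit. Unset Printing Implicit Defensive.
Import Order.TTheory GRing.Theory Num.Theory.
Import numFieldNormedType.Exports.
Local Open Scope classical_set_scope.
Local Open Scope ring_scope.

Section Trop.
Variable R : realType.
Implicit Types (al be p h z x : R) (F : R -> R).

Definition is_glb (S : set R) (x : R) : Prop :=
  (forall y, S y -> x <= y) /\ (forall m, (forall y, S y -> m <= y) -> m <= x).

Definition Omega al be : set R := [set z | al <= z <= be].

Definition trop_series al be F : Prop :=
  (forall z, Omega al be z -> 0 <= F z) /\ F al = 0 /\ F be = 0 /\
  exists a : int -> R, forall z, Omega al be z ->
    is_glb [set a v + z * v%:~R | v in [set: int]] (F z).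

Definition nonsmooth al be F : set R :=
  [set h | al < h < be /\ ~ derivable F h 1].

Definition trop_poly al be F : Prop :=
  trop_series al be F /\ finite_set (nonsmooth al be F).

Definition canon al be F (v : int) : R :=
  sup [set F z - z * v%:~R | z in Omega al be].

Definition lderiv F h : R := lim ((fun x => (F x - F h) / (x - h)) @ h^'-).
Definition rderiv F h : R := lim ((fun x => (F x - F h) / (x - h)) @ h^'+).
Definition mult F h : R := lderiv F h - rderiv F h.

Definition Gp al be p F : R -> R :=
  if `[< derivable F p 1 >] then
    let a := canon al be F in
    let w := xget 0%R [set w : int |
               \forall z \near p, F z = a w + z * w%:~R] in
    let b := fun v : int => if v == w then
               inf [set a u + p * u%:~R | u in [set u : int | u != w]] - p * w%:~R
             else a v in
    fun z => inf [set b v + z * v%:~R | v in [set: int]]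
  else F.

Definition MF al be F (x : R) : \bar R :=
  if (x == al) || (x == be) then +oo%E
  else if `[< nonsmooth al be F x >] then (mult F x)%:E
  else 0%E.

Definition kdelta (y x : R) : \bar R := ((y == x)%:R : R)%:E.

End Trop.

(* Main.v *)
Require Import Defs.
From HB Require Import structures.
From mathcomp Require Import all_boot all_order all_algebra.
From mathcomp Require Import all_classical all_reals all_analysis.
From mathcomp Require Import ring lra zify.
From Stdlib Require Import Lia.
Import Order.TTheory GRing.Theory Num.Theory.
Import numFieldNormedType.Exports.
Local Open Scope classical_set_scope.
Local Open Scope ring_scope.
Set Implicit Arguments. Unset Strict Implicit. Unset Printing Implicit Defensive.
Lemma deriv_eps {R : realType} (f : R -> R) (x : R) :
  derivable f x 1 -> exists s : R, forall e : R, 0 < e -> exists2 d : R, 0 < d &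
    forall t : R, t != 0 -> `|t| < d -> `|(f (x + t) - f x) / t - s| < e.
Proof.
move=> H.
exists (lim (h^-1 *: ((f \o shift x) (h *: 1) - f x) @[h --> 0^'])).
move=> e e0.
have := (@cvgrPdist_lt _ _ _ (0^') _ _ _).1 H e e0.
rewrite near_withinE. move=> H2. have [d d0 Hd] := (nbhs_ballP _ _).1 (H2 ltac:(typeclasses eauto)).
exists d => // t t0 td.
have := Hd t.
rewrite /ball /= sub0r normrN => /(_ td t0).
move=> HH; rewrite distrC; move: HH; congr (`|_ - _| < _). rewrite mulrC -[t^-1 *: _]/(t^-1 * _) -[t%:A]/(t * 1) mulr1 (addrC t x).
by [].
Qed.



Definition glbrep {R : realType} (al be : R) (f : R -> R) (bt : int -> R) :=
  forall z, Omega al be z -> is_glb [set bt v + z * v%:~R | v in [set: int]] (f z).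

Lemma glb_lb {R : realType} (al be : R) f bt z v :
  glbrep al be f bt -> Omega al be z -> f z <= bt v + z * v%:~R.
Proof. by move=> H /H [+ _]; apply; exists v. Qed.

Lemma glb_gr {R : realType} (al be : R) f bt z (m : R) :
  glbrep al be f bt -> Omega al be z -> (forall v, m <= bt v + z * v%:~R) -> m <= f z.
Proof. by move=> H /H [_ +] Hm; apply => y [v _ <-]. Qed.

Lemma int_sep {R : realType} (k k0 : int) : k != k0 ->
  1 <= (k%:~R - k0%:~R : R) \/ (k%:~R - k0%:~R : R) <= -1.
Proof.
move=> /eqP kk.
have [h|h] : (k0 + 1 <= k)%R \/ (k + 1 <= k0)%R by lia.
- by left; have := h; rewrite -(ler_int R) intrD1; lra.
- by right; have := h; rewrite -(ler_int R) intrD1; lra.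
Qed.

Lemma D1 {R : realType} (al be : R) f bt x : glbrep al be f bt -> al < x < be ->
  derivable f x 1 ->
  exists k : int, exists2 d : R, 0 < d &
    forall z, `|z - x| < d -> f z = bt k + z * k%:~R.
Proof.
move=> Hg /andP[ax xb] /deriv_eps [s Hs].
have [d1 d10 Hd1] := Hs (1/4) ltac:(lra).
set m := Num.min d1 (Num.min (x - al) (be - x)).
have : m <= m by [].
rewrite {2}/m !le_min => /and3P[m1 m2 m3].
have m0 : 0 < m by rewrite /m !lt_min d10 /=; apply/andP; split; lra.
set t0 := m / 2.
have t0p : 0 < t0 by rewrite /t0; lra.
have Om1 : Omega al be (x + t0) by rewrite /Omega /=; apply/andP; split; rewrite /t0; lra.
have Om2 : Omega al be (x - t0) by rewrite /Omega /=; apply/andP; split; rewrite /t0; lra.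
have HP := Hd1 t0 (lt0r_neq0 t0p) ltac:(rewrite gtr0_norm //; rewrite /t0; lra).
have HM := Hd1 (- t0) ltac:(rewrite oppr_eq0; exact: lt0r_neq0) ltac:(rewrite normrN gtr0_norm //; rewrite /t0; lra).
move: HP HM; rewrite !ltr_norml => /andP[P1 P2] /andP[M1 M2].
have eP : (f (x + t0) - f x) / t0 * t0 = f (x + t0) - f x by rewrite divfK // lt0r_neq0.
have eM : (f (x + - t0) - f x) / (- t0) * (- t0) = f (x + - t0) - f x
  by rewrite divfK // oppr_eq0 lt0r_neq0.
set qP := (f (x + t0) - f x) / t0 in P1 P2 eP.
set qM := (f (x + - t0) - f x) / (- t0) in M1 M2 eM.
have P3 : - t0 / 4 < f (x + t0) - f x - s * t0 < t0 / 4.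
  by apply/andP; split; nra.
have M3 : - t0 / 4 < f (x - t0) - f x + s * t0 < t0 / 4.
  by apply/andP; split; nra.
move/andP: P3 => [P3 P4]; move/andP: M3 => [M3 M4].
have [k0 Hk0] : exists k0, bt k0 + x * k0%:~R < f x + t0 / 8.
  apply: contrapT => Hn.
  have : f x + t0 / 8 <= f x.
    apply: (glb_gr Hg); first by rewrite /Omega /=; apply/andP; split; lra.
    move=> v; rewrite leNgt; apply/negP => hv; apply: Hn; by exists v.
  lra.
have C1 := glb_lb k0 Hg Om1.
have C2 := glb_lb k0 Hg Om2.
exists k0, (t0 / 4); first lra.
move=> z; rewrite ltr_norml => /andP[z1 z2].
have Omz : Omega al be z by rewrite /Omega /=; apply/andP; split; rewrite /t0 in z1 z2; lra.
apply/eqP; rewrite eq_le; apply/andP; split; first exact: (glb_lb _ Hg Omz).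
apply: (glb_gr Hg Omz) => v.
have [->|vk] := eqVneq v k0; first by [].
have A1 := glb_lb v Hg Om1.
have A2 := glb_lb v Hg Om2.
set K := (v%:~R : R) in A1 A2 *.
set K0 := (k0%:~R : R) in C1 C2 Hk0 *.
have := @int_sep R _ _ vk; rewrite -/K -/K0 => -[D|D].
- have H1 : 0 <= (z - x + t0 / 4) * (K - K0) by apply: mulr_ge0; lra.
  have H2 : 0 <= t0 * (K - K0 - 1) by apply: mulr_ge0; lra.
  nra.
- have H1 : 0 <= (t0 / 4 - (z - x)) * (K0 - K) by apply: mulr_ge0; lra.
  have H2 : 0 <= t0 * (K0 - K - 1) by apply: mulr_ge0; lra.
  nra.
Qed.

Definition Rep {R : realType} (f : R -> R) (x s1 s2 : R) :=
  exists2 d : R, 0 < d &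
    (forall z, x - d < z <= x -> f z = f x + s1 * (z - x)) /\
    (forall z, x <= z < x + d -> f z = f x + s2 * (z - x)).

Lemma Rep_lderiv {R : realType} (f : R -> R) x s1 s2 : Rep f x s1 s2 -> lderiv f x = s1.
Proof.
move=> [d d0 [H1 _]].
rewrite /lderiv; apply: cvg_lim; first exact: Rhausdorff.
apply: cvg_near_cst.
rewrite near_withinE; apply/nbhs_ballP; exists d => // z.
rewrite /ball /= => hz zx.
rewrite H1; last by rewrite (ltW zx) andbT; move: hz; rewrite ltr_distlC; lra.
rewrite addrC addKr mulfK // subr_eq0 lt_eqF //.
Qed.

Lemma Rep_rderiv {R : realType} (f : R -> R) x s1 s2 : Rep f x s1 s2 -> rderiv f x = s2.
Proof.
move=> [d d0 [_ H2]].
rewrite /rderiv; apply: cvg_lim; first exact: Rhausdorff.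
apply: cvg_near_cst.
rewrite near_withinE; apply/nbhs_ballP; exists d => // z.
rewrite /ball /= => hz zx.
rewrite H2; last by rewrite (ltW zx) /=; move: hz; rewrite ltr_distlC; lra.
by rewrite addrC addKr mulfK // subr_eq0 gt_eqF.
Qed.

Lemma Rep_derivable {R : realType} (f : R -> R) x s : Rep f x s s -> derivable f x 1.
Proof.
move=> [d d0 [H1 H2]].
apply: (is_cvg_near_cst s).
rewrite near_withinE; apply/nbhs_ballP; exists d => // h.
rewrite /ball /= sub0r normrN => hd h0.
rewrite /= -[h%:A]/(h * 1) mulr1.
have [hn|hp] := ltP h 0.
- rewrite H1; last by move: hd; rewrite ltr_norml; lra.
  by rewrite addrC addKr -[_ *: _]/(_ * _) addrK mulrC mulfK.
- rewrite H2; last by move: hd; rewrite ltr_norml; lra.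
  by rewrite addrC addKr -[_ *: _]/(_ * _) addrK mulrC mulfK.
Qed.

Lemma Rep_nderiv {R : realType} (al be : R) f bt x s1 s2 :
  glbrep al be f bt -> al < x < be -> Rep f x s1 s2 -> derivable f x 1 -> s1 = s2.
Proof.
move=> Hg Hx [d d0 [H1 H2]] /(D1 Hg Hx) [k [e e0 He]].
set m := Num.min d e.
have : m <= m by [].
rewrite {2}/m le_min => /andP[m1 m2].
have m0 : 0 < m by rewrite /m lt_min d0 e0.
set t := m / 2.
have t0 : 0 < t by rewrite /t; lra.
have ex : f x = bt k + x * k%:~R by apply: He; rewrite subrr normr0.
have e1 : f (x - t) = bt k + (x - t) * k%:~R.
  by apply: He; rewrite addrC addKr normrN gtr0_norm // /t; lra.
have e2 : f (x + t) = bt k + (x + t) * k%:~R.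
  by apply: He; rewrite (addrC x) addrK gtr0_norm // /t; lra.
have f1 := H1 (x - t) ltac:(apply/andP; split; rewrite /t; lra).
have f2 := H2 (x + t) ltac:(apply/andP; split; rewrite /t; lra).
have h1 : s1 * t = k%:~R * t by nra.
have h2 : s2 * t = k%:~R * t by nra.
by move: h1 h2; move/(mulIf (lt0r_neq0 t0)) => -> /(mulIf (lt0r_neq0 t0)).
Qed.

Lemma MF_rep {R : realType} (al be : R) f bt x s1 s2 :
  glbrep al be f bt -> al < x < be -> Rep f x s1 s2 -> MF al be f x = (s1 - s2)%:E.
Proof.
move=> Hg Hx Hr.
have /andP[ax xb] := Hx.
rewrite /MF (gt_eqF ax) (lt_eqF xb) /=.
have [e|ne] := eqVneq s1 s2.
- rewrite e subrr asboolF //; rewrite /nonsmooth /= => -[_]; apply.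
  by move: Hr; rewrite e; apply: Rep_derivable.
- rewrite asboolT; last first.
    by split => // /(Rep_nderiv Hg Hx Hr) /eqP; rewrite (negbTE ne).
  by rewrite /mult (Rep_lderiv Hr) (Rep_rderiv Hr).
Qed.

Lemma minpos {R : realType} (d e : R) : 0 < d -> 0 < e ->
  exists2 m : R, 0 < m & m <= d /\ m <= e.
Proof.
move=> d0 e0; exists (Num.min d e); first by rewrite lt_min d0 e0.
by rewrite !ge_min !lexx ?orbT.
Qed.

Lemma Rep_add {R : realType} (f g : R -> R) x s1 s2 t1 t2 :
  Rep f x s1 s2 -> Rep g x t1 t2 ->
  Rep (fun z => f z + g z) x (s1 + t1) (s2 + t2).
Proof.
move=> [d d0 [H1 H2]] [e e0 [G1 G2]].
have [m m0 [md me]] := minpos d0 e0.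
exists m => //; split => z hz.
- rewrite (H1 z) ?(G1 z); [by ring| |]; move: hz => /andP[]; rewrite ?andbT; lra.
- rewrite (H2 z) ?(G2 z); [by ring| |]; move: hz => /andP[]; lra.
Qed.

Lemma Rep_sub {R : realType} (f g : R -> R) x s1 s2 t1 t2 :
  Rep f x s1 s2 -> Rep g x t1 t2 ->
  Rep (fun z => f z - g z) x (s1 - t1) (s2 - t2).
Proof.
move=> [d d0 [H1 H2]] [e e0 [G1 G2]].
have [m m0 [md me]] := minpos d0 e0.
exists m => //; split => z hz.
- rewrite (H1 z) ?(G1 z); [by ring| |]; move: hz => /andP[]; rewrite ?andbT; lra.
- rewrite (H2 z) ?(G2 z); [by ring| |]; move: hz => /andP[]; lra.
Qed.

Lemma Rep_ext {R : realType} (f g : R -> R) x s1 s2 d :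
  0 < d -> (forall z, `|z - x| < d -> g z = f z) ->
  Rep f x s1 s2 -> Rep g x s1 s2.
Proof.
move=> d0 He [e e0 [H1 H2]].
have [m m0 [md me]] := minpos d0 e0.
have gx : g x = f x by apply: He; rewrite subrr normr0.
exists m => //; split => z /andP[z1 z2].
- rewrite (He z) ?(H1 z) ?gx //; first by apply/andP; split; lra.
  by rewrite ltr_norml; apply/andP; split; lra.
- rewrite (He z) ?(H2 z) ?gx //; first by apply/andP; split; lra.
  by rewrite ltr_norml; apply/andP; split; lra.
Qed.

Definition ramp {R : realType} (y z : R) := Num.max 0 (z - y).

Lemma ramp0 {R : realType} (y z : R) : z <= y -> ramp y z = 0.
Proof. by move=> h; rewrite /ramp; apply/max_idPl; lra. Qed.

Lemma ramp1 {R : realType} (y z : R) : y <= z -> ramp y z = z - y.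
Proof. by move=> h; rewrite /ramp; apply/max_idPr; lra. Qed.

Lemma Rep_ramp {R : realType} (y x : R) :
  Rep (ramp y) x ((y < x)%R%:R) ((y <= x)%R%:R).
Proof.
have [xy|yx|<-] := ltgtP x y.
- exists (y - x); first lra.
  rewrite (ramp0 (ltW xy)) /= ?mulr0n ?mulr1n; split => z /andP[z1 z2]; rewrite ramp0; lra.
- exists (x - y); first lra.
  rewrite (ramp1 (ltW yx)) /= ?mulr0n ?mulr1n; split => z /andP[z1 z2]; rewrite ramp1; lra.
- exists 1; first lra.
  rewrite ramp0 // /= ?mulr0n ?mulr1n; split => z /andP[z1 z2].
  + by rewrite ramp0 //; lra.
  + by rewrite ramp1 //; lra.
Qed.

Lemma lines_eq {R : realType} (bt : int -> R) (j k : int) (x d : R) : 0 < d ->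
  (forall z, `|z - x| < d -> bt j + z * j%:~R = bt k + z * k%:~R) -> j = k.
Proof.
move=> d0 H.
have h1 := H x ltac:(by rewrite subrr normr0).
have h2 := H (x + d / 2) ltac:(by rewrite (addrC x) addrK gtr0_norm; lra).
have : d / 2 * (j%:~R : R) = d / 2 * k%:~R by lra.
have d2 : 0 < d / 2 by lra.
by move/(mulfI (lt0r_neq0 d2))/intr_inj.
Qed.

Lemma ball_int {R : realType} (P : set R) (x : R) :
  (exists2 d : R, 0 < d & forall z, `|z - x| < d -> P z) <-> nbhs x P.
Proof.
split.
- move=> [d d0 H]; apply/nbhs_ballP; exists d => // z; rewrite /ball /= => hz.
  by apply: H; rewrite distrC.
- move/nbhs_ballP => [d d0 H]; exists d => // z hz; apply: H.
  by rewrite /ball /= distrC.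
Qed.

Lemma LinInt {R : realType} (f : R -> R) (bt : int -> R) (u v : R) : u < v ->
  (forall x, u < x < v -> exists k : int, exists2 d : R, 0 < d &
     forall z, `|z - x| < d -> f z = bt k + z * k%:~R) ->
  exists k : int, forall x, u < x < v -> f x = bt k + x * k%:~R.
Proof.
move=> uv H.
set I := [set x : R | u < x < v].
have [k [d d0 Hd]] := H ((u + v) / 2) ltac:(apply/andP; split; lra).
set L := fun j : int => [set z : R | f z = bt j + z * j%:~R].
set C := interior (L k).
set D := \bigcup_(j in [set j : int | j != k]) interior (L j).
have oC : open C by apply: open_interior.
have oD : open D by apply: bigcup_open => j _; apply: open_interior.
have BE : I `&` C = I `&` ~` D.
  apply/seteqP; split => x [Ix Hx]; split => //.
  - move=> [j /= jk] /ball_int [e e0 He].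
    move: Hx => /ball_int [e' e0' He'].
    have [m m0 [me me']] := minpos e0 e0'.
    move/eqP: jk => jk; apply: jk; apply: (@lines_eq R bt j k x m m0).
    move=> z hz; rewrite -He; last by lra.
    by rewrite He'; last by lra.
  - have [j [e e0 He]] := H x Ix.
    have [jk|jk] := eqVneq j k.
    + by apply/ball_int; exists e => // z hz; rewrite /L /= He // jk.
    + by exfalso; apply: Hx; exists j => //; apply/ball_int; exists e.
have cI : connected I.
  apply/connected_intervalP => x y /= /andP[ux xv] /andP[uy yv] z /andP[xz zy].
  by apply/andP; split; lra.
have := cI (I `&` C).
move=> /(_ _ _ _) HI.
have HI' : I `&` C = I.
  apply: HI.
  - exists ((u + v) / 2); split; first by rewrite /I /=; apply/andP; split; lra.
    by apply/ball_int; exists d.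
  - by exists C.
  - by exists (~` D); [apply: open_closedC | ].
exists k => x Ix.
have : (I `&` C) x by rewrite HI'.
move=> [_ /ball_int [e e0 He]].
by apply: He; rewrite subrr normr0.
Qed.

Lemma aff_left {R : realType} (a b u x : R) : u < x ->
  (forall t, u < t < x -> 0 <= a + b * t) -> 0 <= a + b * x.
Proof.
move=> ux H; rewrite leNgt; apply/negP => V0.
have [b0|b0] := leP 0 b.
- have := H ((u + x) / 2) ltac:(apply/andP; split; lra).
  have : 0 <= b * (x - (u + x) / 2) by apply: mulr_ge0 => //; lra.
  nra.
- set V := a + b * x in V0.
  have e0 : 0 < (- V) / (2 * - b) by apply: divr_gt0; lra.
  have ux2 : 0 < (x - u) / 2 by lra.
  have [m m0 [m1 m2]] := minpos e0 ux2.
  have := H (x - m) ltac:(apply/andP; split; lra).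
  have eb : (- b) * ((- V) / (2 * - b)) = - V / 2 by field; lra.
  have : (- b) * m <= (- b) * ((- V) / (2 * - b)) by apply: ler_wpM2l; lra.
  rewrite eb /V; nra.
Qed.

Lemma aff_right {R : realType} (a b u x : R) : x < u ->
  (forall t, x < t < u -> 0 <= a + b * t) -> 0 <= a + b * x.
Proof.
move=> xu H.
have := @aff_left R a (- b) (- u) (- x) ltac:(lra).
rewrite mulrNN; apply => t /andP[t1 t2].
have := H (- t) ltac:(apply/andP; split; lra).
by rewrite mulrN mulNr.
Qed.

Lemma touch_left {R : realType} (al be : R) f bt (k : int) u x :
  glbrep al be f bt -> al <= u -> u < x -> x <= be ->
  (forall z, u < z < x -> f z = bt k + z * k%:~R) -> f x = bt k + x * k%:~R.
Proof.
move=> Hg au ux xb H.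
have Ox : Omega al be x by apply/andP; split; lra.
apply/eqP; rewrite eq_le (glb_lb _ Hg Ox) /=.
apply: (glb_gr Hg Ox) => j.
have := @aff_left R (bt j - bt k) (j%:~R - k%:~R) u x ux.
have HH : forall t, u < t < x -> 0 <= bt j - bt k + (j%:~R - k%:~R) * t.
  move=> t /andP[t1 t2].
  have Ot : Omega al be t by apply/andP; split; lra.
  have := glb_lb j Hg Ot; rewrite H ?t1 ?t2 //; lra.
move=> /(_ HH); lra.
Qed.

Lemma touch_right {R : realType} (al be : R) f bt (k : int) u x :
  glbrep al be f bt -> al <= x -> x < u -> u <= be ->
  (forall z, x < z < u -> f z = bt k + z * k%:~R) -> f x = bt k + x * k%:~R.
Proof.
move=> Hg ax xu ub H.
have Ox : Omega al be x by apply/andP; split; lra.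
apply/eqP; rewrite eq_le (glb_lb _ Hg Ox) /=.
apply: (glb_gr Hg Ox) => j.
have := @aff_right R (bt j - bt k) (j%:~R - k%:~R) u x xu.
have HH : forall t, x < t < u -> 0 <= bt j - bt k + (j%:~R - k%:~R) * t.
  move=> t /andP[t1 t2].
  have Ot : Omega al be t by apply/andP; split; lra.
  have := glb_lb j Hg Ot; rewrite H ?t1 ?t2 //; lra.
move=> /(_ HH); lra.
Qed.

Lemma iso_seq {R : realType} (s : seq R) (x : R) :
  exists2 d : R, 0 < d & forall y, y \in s -> y != x -> d <= `|y - x|.
Proof.
elim: s => [|y0 s [d d0 Hd]]; first by exists 1 => // y; rewrite in_nil.
have [->|yx] := eqVneq y0 x.
- exists d => // y; rewrite in_cons => /orP[/eqP->|ys]; first by rewrite eqxx.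
  exact: Hd.
- have y0p : 0 < `|y0 - x| by rewrite normr_gt0 subr_eq0.
  have [m m0 [m1 m2]] := minpos d0 y0p.
  exists m => // y; rewrite in_cons => /orP[/eqP->|ys] yx'; first by [].
  by apply: le_trans m1 _; apply: Hd.
Qed.

Lemma iso_fin {R : realType} (S : set R) (x : R) : finite_set S ->
  exists2 d : R, 0 < d & forall y, S y -> y != x -> d <= `|y - x|.
Proof.
move=> /finite_fsetP [X ->].
have [d d0 Hd] := iso_seq (finmap.enum_fset X) x.
by exists d => // y /= yX; apply: Hd.
Qed.

Lemma REPf {R : realType} (al be : R) f bt x :
  glbrep al be f bt -> finite_set (nonsmooth al be f) -> al < x < be ->
  exists w1 w2 : int, exists2 d : R, 0 < d &
   [/\ forall z, x - d < z <= x -> f z = bt w1 + z * w1%:~R,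
       forall z, x <= z < x + d -> f z = bt w2 + z * w2%:~R &
       Rep f x w1%:~R w2%:~R].
Proof.
move=> Hg Hfin /andP[ax xb].
have [d0 d00 Hd0] := iso_fin x Hfin.
have xa0 : 0 < x - al by lra.
have bx0 : 0 < be - x by lra.
have [m1 m10 [m11 m12]] := minpos xa0 bx0.
have [m m0 [md mm]] := minpos d00 m10.
have sm : forall y, x - m < y < x + m -> y != x -> derivable f y 1.
  move=> y /andP[y1 y2] yx; apply: contrapT => nd.
  have := Hd0 y ltac:(split => //; apply/andP; split; lra) yx.
  have : `|y - x| < m by rewrite ltr_norml; apply/andP; split; lra.
  lra.
have loc : forall y, x - m < y < x + m -> y != x -> exists k : int, exists2 d : R, 0 < d &
     forall z, `|z - y| < d -> f z = bt k + z * k%:~R.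
  move=> y /andP[y1 y2] yx.
  apply: (D1 Hg); first by apply/andP; split; lra.
  by apply: sm => //; apply/andP; split; lra.
have [w1 Hw1] : exists k : int, forall y, x - m < y < x -> f y = bt k + y * k%:~R.
  apply: LinInt; first lra.
  move=> y /andP[y1 y2]; apply: loc; first by apply/andP; split; lra.
  by rewrite lt_eqF.
have [w2 Hw2] : exists k : int, forall y, x < y < x + m -> f y = bt k + y * k%:~R.
  apply: LinInt; first lra.
  move=> y /andP[y1 y2]; apply: loc; first by apply/andP; split; lra.
  by rewrite gt_eqF.
have t1 : f x = bt w1 + x * w1%:~R.
  by apply: (touch_left Hg _ _ _ Hw1); lra.
have t2 : f x = bt w2 + x * w2%:~R.
  by apply: (touch_right Hg _ _ _ Hw2); lra.
have L1 : forall z, x - m < z <= x -> f z = bt w1 + z * w1%:~R.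
  move=> z /andP[z1 z2]; have [zx|zx] := ltP z x; last first.
    by have -> : z = x by lra.
  by apply: Hw1; apply/andP; split; lra.
have L2 : forall z, x <= z < x + m -> f z = bt w2 + z * w2%:~R.
  move=> z /andP[z1 z2]; have [zx|zx] := ltP x z.
    by apply: Hw2; apply/andP; split; lra.
  by have -> : z = x by lra.
exists w1, w2, m => //; split => //.
exists m => //; split => z hz.
- by rewrite (L1 z hz) t1; ring.
- by rewrite (L2 z hz) t2; ring.
Qed.

Lemma glb_inf {R : realType} (S : set R) (x : R) : is_glb S x -> inf S = x.
Proof.
move=> [Hl Hg].
have ne : S !=set0.
  apply: contrapT => hne; have := Hg (x + 1) => /(_ _).
  have : forall y, S y -> x + 1 <= y by move=> y Sy; exfalso; apply: hne; exists y.
  move=> h /(_ h); lra.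
apply/eqP; rewrite eq_le; apply/andP; split; last exact: lb_le_inf.
apply: Hg => y Sy; apply: ge_inf => //; exists x => z; exact: Hl.
Qed.

Lemma canon_ub {R : realType} (al be : R) F (v : int) (M : R) : al <= be ->
  (forall z, Omega al be z -> F z - z * v%:~R <= M) -> Defs.canon al be F v <= M.
Proof.
move=> ab H; apply: ge_sup.
  by exists (F al - al * v%:~R); exists al => //; apply/andP; split; lra.
by move=> y [z Oz <-]; apply: H.
Qed.

Lemma canon_glb {R : realType} (al be : R) F (a0 : int -> R) : al <= be ->
  glbrep al be F a0 -> glbrep al be F (Defs.canon al be F).
Proof.
move=> ab Ha z Oz.
have lb : forall v, F z <= Defs.canon al be F v + z * v%:~R.
  move=> v.
  have : F z - z * v%:~R <= Defs.canon al be F v.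
    apply: ub_le_sup; last by exists z.
    exists (a0 v) => y [z' Oz' <-]; have := glb_lb v Ha Oz'; lra.
  lra.
split; first by move=> y [v _ <-].
move=> m Hm; apply: (glb_gr Ha Oz) => v.
have := Hm _ (ex_intro2 _ _ v I erefl).
have : Defs.canon al be F v <= a0 v.
  by apply: canon_ub => // z' Oz'; have := glb_lb v Ha Oz'; lra.
lra.
Qed.

Lemma lines_eq2 {R : realType} (bt : int -> R) (j k : int) (x1 x2 : R) : x1 != x2 ->
  bt j + x1 * j%:~R = bt k + x1 * k%:~R ->
  bt j + x2 * j%:~R = bt k + x2 * k%:~R -> j = k.
Proof.
move=> x12 h1 h2.
have : (x1 - x2) * (j%:~R : R) = (x1 - x2) * k%:~R by lra.
by move/(mulfI _)/intr_inj; apply; rewrite subr_eq0.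
Qed.

Lemma line_Rep {R : realType} (f : R -> R) (bt : int -> R) (k : int) (x d : R) :
  0 < d -> (forall z, `|z - x| < d -> f z = bt k + z * k%:~R) ->
  Rep f x k%:~R k%:~R.
Proof.
move=> d0 H.
have fx : f x = bt k + x * k%:~R by apply: H; rewrite subrr normr0.
exists d => //; split => z /andP[z1 z2]; rewrite H ?fx; try ring;
  rewrite ltr_norml; apply/andP; split; lra.
Qed.

Lemma delta_lt_le {R : realType} (y x : R) :
  ((y < x)%R%:R - (y <= x)%R%:R : R) = - (y == x)%:R.
Proof. by case: ltgtP => _ /=; rewrite ?mulr0n ?mulr1n; ring. Qed.

Definition tent {R : realType} (a b c z : R) :=
  ramp a z - ramp (a + c) z - ramp (b - c) z + ramp b z.

Lemma tent_prop {R : realType} (a b c z : R) : 0 < c -> a + c <= b - c ->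
  [/\ 0 <= tent a b c z <= c,
      z <= a \/ b <= z -> tent a b c z = 0,
      a <= z -> tent a b c z <= z - a,
      z <= b -> tent a b c z <= b - z &
      a <= z <= b -> [\/ tent a b c z = c, tent a b c z = z - a | tent a b c z = b - z]].
Proof.
move=> c0 hc.
have [za|az] := leP z a.
  have tv : tent a b c z = 0.
    by rewrite /tent (ramp0 za) !ramp0 //; lra.
  rewrite tv; split; [apply/andP; split; lra | move=> *; lra | move=> *; lra | move=> *; lra | ].
  by move=> /andP[h1 h2]; apply: Or32; lra.
have [zac|acz] := leP z (a + c).
  have tv : tent a b c z = z - a.
    by rewrite /tent (ramp1 (ltW az)) !ramp0 //; lra.
  rewrite tv; split; [apply/andP; split; lra | move=> *; lra | move=> *; lra | move=> *; lra | ].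
  by move=> _; apply: Or32.
have [zbc|bcz] := leP z (b - c).
  have tv : tent a b c z = c.
    by rewrite /tent (ramp1 (ltW az)) (ramp1 (ltW acz)) !ramp0 //; try lra; ring.
  rewrite tv; split; [apply/andP; split; lra | move=> *; lra | move=> *; lra | move=> *; lra | ].
  by move=> _; apply: Or31.
have [zb|bz] := leP z b.
  have tv : tent a b c z = b - z.
    by rewrite /tent (ramp1 (ltW az)) (ramp1 (ltW acz)) (ramp1 (ltW bcz)) (ramp0 zb); ring.
  rewrite tv; split; [apply/andP; split; lra | move=> *; lra | move=> *; lra | move=> *; lra | ].
  by move=> _; apply: Or33.
have tv : tent a b c z = 0.
  by rewrite /tent (ramp1 (ltW az)) (ramp1 (ltW acz)) (ramp1 (ltW bcz)) (ramp1 (ltW bz)); ring.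
rewrite tv; split; [apply/andP; split; lra | move=> *; lra | move=> *; lra | move=> *; lra | ].
by move=> /andP[h1 h2]; apply: Or33; lra.
Qed.

Lemma Rep_tent {R : realType} (a b c x : R) :
  Rep (tent a b c) x
    ((a < x)%R%:R - (a + c < x)%R%:R - (b - c < x)%R%:R + (b < x)%R%:R)
    ((a <= x)%R%:R - (a + c <= x)%R%:R - (b - c <= x)%R%:R + (b <= x)%R%:R).
Proof.
apply: Rep_add; last exact: Rep_ramp.
apply: Rep_sub; last exact: Rep_ramp.
apply: Rep_sub; last exact: Rep_ramp.
exact: Rep_ramp.
Qed.

Lemma Kl_lem {R : realType} (al be : R) F A a b (W : int) :
  glbrep al be F A -> finite_set (nonsmooth al be F) ->
  al <= a -> a < b -> b <= be ->
  (forall x, a <= x <= b -> F x = A W + x * W%:~R) ->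
  (al < a -> ~ derivable F a 1) ->
  forall z, Omega al be z -> F z <= F a + (W%:~R + 1) * (z - a).
Proof.
move=> Hg Hfin Hal ab Hbe HFab Ha_ns.
have Fa : F a = A W + a * W%:~R by apply: HFab; apply/andP; split; lra.
move=> z Oz; have [za|za] := leP a z.
  have := glb_lb W Hg Oz; lra.
have ala : al < a by move: Oz => /andP[]; lra.
have hx : al < a < be by apply/andP; split; lra.
have [w1 [w2 [d d0 [L1 L2 Rp]]]] := REPf Hg Hfin hx.
have ba0 : 0 < b - a by lra.
have [m m0 [md mb]] := minpos d0 ba0.
have w2W : w2 = W.
  apply: (@lines_eq2 _ A _ _ a (a + m / 2)).
    by apply/negP => /eqP; lra.
  - by rewrite -L2 -?Fa //; apply/andP; split; lra.
  - rewrite -L2; last by apply/andP; split; lra.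
    by apply: HFab; apply/andP; split; lra.
have w1W : w1 != W.
  apply/negP => /eqP e; apply: (Ha_ns ala).
  by apply: (@Rep_derivable _ _ _ w1%:~R); move: Rp; rewrite w2W e.
have aal0 : 0 < a - al by lra.
have [m' m0' [md' ma']] := minpos d0 aal0.
have Fa1 : F a = A w1 + a * w1%:~R by apply: L1; apply/andP; split; lra.
have w1W' : W <= w1.
  rewrite leNgt; apply/negP => lt.
  have z'O : Omega al be (a - m' / 2) by apply/andP; split; lra.
  have h1 := glb_lb W Hg z'O.
  have h2 := L1 (a - m' / 2) ltac:(apply/andP; split; lra).
  have : (w1%:~R : R) + 1 <= W%:~R by rewrite -intrD1 ler_int; clear -lt; lia.
  move=> hh.
  have : 0 <= (W%:~R - w1%:~R - 1) * (m' / 2) by apply: mulr_ge0; lra.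
  lra.
have hw : W%:~R + 1 <= (w1%:~R : R) by rewrite -intrD1 ler_int; clear -w1W w1W'; lia.
have := glb_lb w1 Hg Oz.
have : 0 <= (w1%:~R - (W%:~R + 1)) * (a - z) by apply: mulr_ge0; lra.
lra.
Qed.

Lemma Kr_lem {R : realType} (al be : R) F A a b (W : int) :
  glbrep al be F A -> finite_set (nonsmooth al be F) ->
  al <= a -> a < b -> b <= be ->
  (forall x, a <= x <= b -> F x = A W + x * W%:~R) ->
  (b < be -> ~ derivable F b 1) ->
  forall z, Omega al be z -> F z <= F b + (W%:~R - 1) * (z - b).
Proof.
move=> Hg Hfin Hal ab Hbe HFab Hb_ns.
have Fb : F b = A W + b * W%:~R by apply: HFab; apply/andP; split; lra.
move=> z Oz; have [zb|zb] := leP z b.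
  have := glb_lb W Hg Oz; lra.
have bbe : b < be by move: Oz => /andP[]; lra.
have hx : al < b < be by apply/andP; split; lra.
have [w1 [w2 [d d0 [L1 L2 Rp]]]] := REPf Hg Hfin hx.
have ba0 : 0 < b - a by lra.
have [m m0 [md mb]] := minpos d0 ba0.
have w1W : w1 = W.
  apply: (@lines_eq2 _ A _ _ b (b - m / 2)).
    by apply/negP => /eqP; lra.
  - by rewrite -L1 -?Fb //; apply/andP; split; lra.
  - rewrite -L1; last by apply/andP; split; lra.
    by apply: HFab; apply/andP; split; lra.
have w2W : w2 != W.
  apply/negP => /eqP e; apply: (Hb_ns bbe).
  by apply: (@Rep_derivable _ _ _ w1%:~R); move: Rp; rewrite w1W e.
have bbe0 : 0 < be - b by lra.
have [m' m0' [md' mb']] := minpos d0 bbe0.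
have Fb2 : F b = A w2 + b * w2%:~R by apply: L2; apply/andP; split; lra.
have w2W' : w2 <= W.
  rewrite leNgt; apply/negP => lt.
  have z'O : Omega al be (b + m' / 2) by apply/andP; split; lra.
  have h1 := glb_lb W Hg z'O.
  have h2 := L2 (b + m' / 2) ltac:(apply/andP; split; lra).
  have : W%:~R + 1 <= (w2%:~R : R) by rewrite -intrD1 ler_int; clear -lt; lia.
  move=> hh.
  have : 0 <= (w2%:~R - W%:~R - 1) * (m' / 2) by apply: mulr_ge0; lra.
  lra.
have hw : (w2%:~R : R) + 1 <= W%:~R by rewrite -intrD1 ler_int; clear -w2W w2W'; lia.
have := glb_lb w2 Hg Oz.
have : 0 <= (W%:~R - 1 - w2%:~R) * (z - b) by apply: mulr_ge0; lra.
lra.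
Qed.

Lemma neqS (W : int) : W + 1 != W.
Proof. by apply/eqP; lia. Qed.

Lemma neqP (W : int) : W - 1 != W.
Proof. by apply/eqP; lia. Qed.

Lemma intrM1 {R : realType} (W : int) : ((W - 1)%:~R : R) = W%:~R - 1.
Proof. by rewrite rmorphB rmorph1. Qed.

Lemma min_prop {R : realType} (x y : R) :
  Num.min x y <= x /\ Num.min x y <= y.
Proof. by rewrite !ge_min !lexx ?orbT. Qed.

Lemma N_lem {R : realType} (al be : R) F A a b p (W : int) :
  glbrep al be F A -> Omega al be a -> Omega al be b -> a < p -> p < b ->
  F a = A W + a * W%:~R -> F b = A W + b * W%:~R -> F p = A W + p * W%:~R ->
  A (W + 1) <= F a - (W%:~R + 1) * a ->
  A (W - 1) <= F b - (W%:~R - 1) * b ->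
  inf [set A u + p * u%:~R | u in [set u : int | u != W]] = F p + Num.min (p - a) (b - p).
Proof.
move=> Hg Oa Ob ap pb Fa Fb Fp CA1 CA2.
have [cl cr] := min_prop (p - a) (b - p).
apply: glb_inf; split.
- move=> y [u /= uW <-].
  have := @int_sep R _ _ uW; case => D.
  + have := glb_lb u Hg Oa.
    have : 0 <= (u%:~R - W%:~R - 1) * (p - a) by apply: mulr_ge0; lra.
    lra.
  + have := glb_lb u Hg Ob.
    have : 0 <= (W%:~R - 1 - u%:~R) * (b - p) by apply: mulr_ge0; lra.
    lra.
- move=> m Hm.
  have h1 := Hm _ (ex_intro2 _ _ (W + 1) (neqS W) erefl).
  have h2 := Hm _ (ex_intro2 _ _ (W - 1) (neqP W) erefl).
  rewrite /= intrD1 in h1; rewrite /= intrM1 in h2.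
  have : m - F p <= Num.min (p - a) (b - p).
    by rewrite le_min; apply/andP; split; lra.
  lra.
Qed.

Lemma Gval_lem {R : realType} (al be : R) F A (bb : int -> R) a b p (W : int) :
  glbrep al be F A -> al <= a -> a < p -> p < b -> b <= be ->
  (forall x, a <= x <= b -> F x = A W + x * W%:~R) ->
  A (W + 1) <= F a - (W%:~R + 1) * a ->
  A (W - 1) <= F b - (W%:~R - 1) * b ->
  bb W = F p + Num.min (p - a) (b - p) - p * W%:~R ->
  (forall v, v != W -> bb v = A v) ->
  forall z, Omega al be z ->
    is_glb [set bb v + z * v%:~R | v in [set: int]]
      (F z + tent a b (Num.min (p - a) (b - p)) z).
Proof.
move=> Hg Hal ap pb Hbe HFab CA1 CA2 bbW bbv z Oz.
have [cl cr] := min_prop (p - a) (b - p).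
set c := Num.min (p - a) (b - p) in cl cr bbW *.
have c0 : 0 < c by rewrite /c lt_min; apply/andP; split; lra.
have hc : a + c <= b - c by lra.
have [T0 T1 T2 T3 T4] := tent_prop z c0 hc.
have Oa : Omega al be a by apply/andP; split; lra.
have Ob : Omega al be b by apply/andP; split; lra.
have Fa : F a = A W + a * W%:~R by apply: HFab; apply/andP; split; lra.
have Fb : F b = A W + b * W%:~R by apply: HFab; apply/andP; split; lra.
have Fp : F p = A W + p * W%:~R by apply: HFab; apply/andP; split; lra.
move: T0 => /andP[T0 T0'].
split.
- move=> y [v _ <-].
  have [->|vW] := eqVneq v W.
    by rewrite bbW; have := glb_lb W Hg Oz; lra.
  rewrite bbv //.
  case: (boolP (a < z < b)) => [/andP[az zb]|nzab].
  + have Fz : F z = A W + z * W%:~R by apply: HFab; apply/andP; split; lra.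
    have := @int_sep R _ _ vW; case => D.
    * have := glb_lb v Hg Oa.
      have : 0 <= (v%:~R - W%:~R - 1) * (z - a) by apply: mulr_ge0; lra.
      have := T2 (ltW az); lra.
    * have := glb_lb v Hg Ob.
      have : 0 <= (W%:~R - 1 - v%:~R) * (b - z) by apply: mulr_ge0; lra.
      have := T3 (ltW zb); lra.
  + have t0 : tent a b c z = 0.
      apply: T1; move: nzab; rewrite negb_and -!leNgt => /orP[h|h]; [left|right] => //.
    by rewrite t0; have := glb_lb v Hg Oz; lra.
- move=> m Hm.
  have hm : forall v, m <= bb v + z * v%:~R by move=> v; apply: Hm; exists v.
  have h1 := hm (W + 1); rewrite bbv ?neqS // intrD1 in h1.
  have h2 := hm (W - 1); rewrite bbv ?neqP // intrM1 in h2.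
  have h0 := hm W; rewrite bbW in h0.
  case: (leP a z) => az; case: (leP z b) => zb.
  + have Fz : F z = A W + z * W%:~R by apply: HFab; apply/andP; split; lra.
    by case: (T4 ltac:(apply/andP; split; lra)) => ->; lra.
  + have -> : tent a b c z = 0 by apply: T1; right; lra.
    rewrite addr0; apply: (glb_gr Hg Oz) => v.
    have [->|vW] := eqVneq v W; last by rewrite -bbv.
    have : 0 <= z - b by lra.
    lra.
  + have -> : tent a b c z = 0 by apply: T1; left; lra.
    rewrite addr0; apply: (glb_gr Hg Oz) => v.
    have [->|vW] := eqVneq v W; last by rewrite -bbv.
    have : 0 <= a - z by lra.
    lra.
  + lra.
Qed.

Lemma oo_kd {R : realType} (a b y z x : R) :
  (+oo - kdelta a x - kdelta b x + kdelta y x + kdelta z x)%E = +oo%E.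
Proof. by rewrite /kdelta -!EFinN !addye. Qed.

Lemma MF_al {R : realType} (al be : R) f : MF al be f al = +oo%E.
Proof. by rewrite /MF eqxx orTb. Qed.

Lemma MF_be {R : realType} (al be : R) f : MF al be f be = +oo%E.
Proof. by rewrite /MF eqxx orbT. Qed.

Lemma kink_lem {R : realType} (a b c x : R) :
  ((a < x)%R%:R - (a + c < x)%R%:R - (b - c < x)%R%:R + (b < x)%R%:R) -
  ((a <= x)%R%:R - (a + c <= x)%R%:R - (b - c <= x)%R%:R + (b <= x)%R%:R)
  = - (a == x)%:R + (a + c == x)%:R + (b - c == x)%:R - (b == x)%:R :> R.
Proof.
have h1 := delta_lt_le a x; have h2 := delta_lt_le (a + c) x.
have h3 := delta_lt_le (b - c) x; have h4 := delta_lt_le b x.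
lra.
Qed.

Lemma final_lem {R : realType} (al be : R) F A G bb a b c :
  al < be -> glbrep al be F A -> finite_set (nonsmooth al be F) ->
  glbrep al be G bb ->
  (forall z, Omega al be z -> G z = F z + tent a b c z) ->
  finite_set (nonsmooth al be G) /\
  (forall x, Omega al be x -> MF al be G x =
     (MF al be F x - kdelta a x - kdelta b x + kdelta (a + c) x + kdelta (b - c) x)%E).
Proof.
move=> Hab Hg Hfin HgG HGval.
have RepG : forall x, al < x < be -> exists w1 w2 : int,
    Rep F x w1%:~R w2%:~R /\
    Rep G x (w1%:~R + ((a < x)%R%:R - (a + c < x)%R%:R - (b - c < x)%R%:R + (b < x)%R%:R))
            (w2%:~R + ((a <= x)%R%:R - (a + c <= x)%R%:R - (b - c <= x)%R%:R + (b <= x)%R%:R)).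
  move=> x hx; have [w1 [w2 [d d0 [_ _ Rp]]]] := REPf Hg Hfin hx.
  exists w1, w2; split => //.
  have /andP[x1 x2] := hx.
  have xa0 : 0 < x - al by lra.
  have bx0 : 0 < be - x by lra.
  have [m m0 [m1 m2]] := minpos xa0 bx0.
  apply: (@Rep_ext _ (fun z => F z + tent a b c z) G x _ _ m m0).
    move=> z; rewrite ltr_norml => /andP[z1 z2]; apply: HGval.
    by apply/andP; split; lra.
  exact: Rep_add Rp (Rep_tent a b c x).
split.
- apply: (@sub_finite_set _ _
    (nonsmooth al be F `|` ([set a] `|` [set a + c] `|` [set b - c] `|` [set b]))).
    move=> x [hx ndG]; apply: contrapT => hn; apply: ndG.
    have [w1 [w2 [RF RG]]] := RepG x hx.
    have dF : derivable F x 1.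
      by apply: contrapT => nd; apply: hn; left; split.
    have e12 := Rep_nderiv Hg hx RF dF.
    have ea : (a == x) = false by apply/negP => /eqP e; apply: hn; right; left; left; left.
    have eac : (a + c == x) = false by apply/negP => /eqP e; apply: hn; right; left; left; right.
    have ebc : (b - c == x) = false by apply/negP => /eqP e; apply: hn; right; left; right.
    have eb : (b == x) = false by apply/negP => /eqP e; apply: hn; right; right.
    have := kink_lem a b c x; rewrite ea eac ebc eb /= ?mulr0n => K.
    move: RG K; set T1 := (X in Rep _ _ (_ + X) _); set T2 := (X in Rep _ _ _ (_ + X)).
    move=> RG K.
    have e : w2%:~R + T2 = w1%:~R + T1 by rewrite /T1 /T2; lra.
    by rewrite e in RG; exact: Rep_derivable RG.
  rewrite !finite_setU; do !split.
  - exact: Hfin.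
  - exact: finite_set1.
  - exact: finite_set1.
  - exact: finite_set1.
  - exact: finite_set1.
- move=> x Ox.
  have [->|xal] := eqVneq x al.
    by rewrite !MF_al oo_kd.
  have [->|xbe] := eqVneq x be.
    by rewrite !MF_be oo_kd.
  have hx : al < x < be.
    move: Ox => /andP[h1 h2]; apply/andP; split.
      by rewrite lt_def xal h1.
    by rewrite lt_def eq_sym xbe h2.
  have [w1 [w2 [RF RG]]] := RepG x hx.
  rewrite (MF_rep HgG hx RG) (MF_rep Hg hx RF) /kdelta -!EFinB -!EFinD.
  congr (_%:E); have := kink_lem a b c x; lra.
Qed.

Unset Implicit Arguments.

Theorem mainTheorem3 (R : realType) (al be : R) (F : R -> R) (p a b : R) :
  al < be ->
  trop_poly al be F ->
  al < p < be -> ~ nonsmooth al be F p ->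
  connected_component ([set x | al < x < be] `\` nonsmooth al be F) p
    = [set x | a < x < b] ->
  let c := Num.min (p - a) (b - p) in
  trop_poly al be (Gp al be p F) /\
  (forall x, Omega al be x ->
     MF al be (Gp al be p F) x =
     (MF al be F x - kdelta a x - kdelta b x
        + kdelta (a + c) x + kdelta (b - c) x)%E).
Proof.
move=> Hab [[F0 [Fal [Fbe [a0 Ha0]]]] Hfin] Hp Hns Hcomp c.
have ab' : al <= be := ltW Hab.
set A := Defs.canon al be F.
have Hg : glbrep al be F A := canon_glb ab' Ha0.
have /andP[alp pbe] := Hp.
have HdP : derivable F p 1 by apply: contrapT => nd; apply: Hns; split.
set A0 := [set x | al < x < be] `\` nonsmooth al be F.
have A0p : A0 p by split; [exact: Hp | move=> [_ nd]; exact: nd HdP].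
have Hcc : connected_component A0 p p := connected_component_refl A0p.
rewrite Hcomp in Hcc; move: Hcc => /= /andP[ap pb].
have Hsub : forall x, a < x < b -> al < x < be /\ derivable F x 1.
  move=> x hx; have : connected_component A0 p x by rewrite Hcomp.
  move/connected_component_sub => [/= hx1 hx2]; split => //.
  by apply: contrapT => nd; apply: hx2; split.
have Hal : al <= a.
  rewrite leNgt; apply/negP => aal.
  have [h _] := Hsub al ltac:(apply/andP; split; lra).
  by move: h => /andP[]; lra.
have Hbe : b <= be.
  rewrite leNgt; apply/negP => bbe.
  have [h _] := Hsub be ltac:(apply/andP; split; lra).
  by move: h => /andP[]; lra.
have cB : forall u v : R, connected [set x | u < x < v].
  move=> u v; apply/connected_intervalP => x y /= /andP[ux xv] /andP[uy yv] z /andP[xz zy].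
  by apply/andP; split; lra.
have Ha_ns : al < a -> ~ derivable F a 1.
  move=> ala da.
  have hx : al < a < be by apply/andP; split; lra.
  have [k [d d0 Hd]] := D1 Hg hx da.
  have aal : 0 < a - al by lra.
  have [e e0 [ed ea]] := minpos d0 aal.
  have sub : [set x | a - e < x < b] `<=` A0.
    move=> x /andP[x1 x2]; have [xa|ax] := leP x a; last first.
      have [h1 h2] := Hsub x ltac:(apply/andP; split; lra).
      by split; [exact: h1 | move=> [_ nd]; exact: nd h2].
    split; first by apply/andP; split; lra.
    move=> [_ nd]; apply: nd; apply: (@Rep_derivable _ _ _ k%:~R).
    apply: (@line_Rep _ _ A k x (d - (a - x))); first lra.
    move=> z; rewrite ltr_norml => /andP[z1 z2]; apply: Hd.
    by rewrite ltr_norml; apply/andP; split; lra.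
  have Bp : [set x | a - e < x < b] p by apply/andP; split; lra.
  have Hm : [set x | a - e < x < b] `<=` connected_component A0 p :=
    connected_component_max Bp sub (cB _ _).
  have Ba : [set x | a - e < x < b] a by apply/andP; split; lra.
  have := Hm a Ba; rewrite Hcomp /= => /andP[h1 h2].
  by move: h1; rewrite ltxx.
have Hb_ns : b < be -> ~ derivable F b 1.
  move=> bbe db.
  have hx : al < b < be by apply/andP; split; lra.
  have [k [d d0 Hd]] := D1 Hg hx db.
  have bbe' : 0 < be - b by lra.
  have [e e0 [ed eb]] := minpos d0 bbe'.
  have sub : [set x | a < x < b + e] `<=` A0.
    move=> x /andP[x1 x2]; have [xb|bx] := ltP x b.
      have [h1 h2] := Hsub x ltac:(apply/andP; split; lra).
      by split; [exact: h1 | move=> [_ nd]; exact: nd h2].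
    split; first by apply/andP; split; lra.
    move=> [_ nd]; apply: nd; apply: (@Rep_derivable _ _ _ k%:~R).
    apply: (@line_Rep _ _ A k x (d - (x - b))); first lra.
    move=> z; rewrite ltr_norml => /andP[z1 z2]; apply: Hd.
    by rewrite ltr_norml; apply/andP; split; lra.
  have Bp : [set x | a < x < b + e] p by apply/andP; split; lra.
  have Hm : [set x | a < x < b + e] `<=` connected_component A0 p :=
    connected_component_max Bp sub (cB _ _).
  have Bb : [set x | a < x < b + e] b by apply/andP; split; lra.
  have := Hm b Bb; rewrite Hcomp /= => /andP[h1 h2].
  by move: h2; rewrite ltxx.
have [W [HW HGdef]] : exists W : int,
  (\forall z \near p, F z = A W + z * W%:~R) /\
  Gp al be p F = fun z => inf [set (if v == W then
      inf [set A u + p * u%:~R | u in [set u : int | u != W]] - p * W%:~R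
      else A v) + z * v%:~R | v in [set: int]].
  exists (xget 0 [set w : int | \forall z \near p, F z = A w + z * w%:~R]); split.
    have : exists w : int, [set w : int | \forall z \near p, F z = A w + z * w%:~R] w.
      have [k [d d0 Hd]] := D1 Hg Hp HdP.
      by exists k; apply/ball_int; exists d.
    by move/(xgetPex 0).
  by rewrite /Gp asboolT.
pose bb := fun v : int => if v == W then
      inf [set A u + p * u%:~R | u in [set u : int | u != W]] - p * W%:~R
      else A v.
set G := Gp al be p F.
have HGz : forall z, G z = inf [set bb v + z * v%:~R | v in [set: int]].
  by move=> z; rewrite /G HGdef.
have [dW dW0 HdW] := (ball_int _ _).2 HW.
have [k1 HL] : exists k : int, forall x, a < x < b -> F x = A k + x * k%:~R.
  apply: LinInt; first lra.
  move=> x hx; have [h1 h2] := Hsub x hx.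
  exact: D1 Hg h1 h2.
have k1W : k1 = W.
  have bp0 : 0 < b - p by lra.
  have [m m0 [m1 m2]] := minpos dW0 bp0.
  apply: (@lines_eq2 _ A _ _ p (p + m / 2)).
    by rewrite eq_sym; apply/negP => /eqP; lra.
  - rewrite -HL ?HdW //; first by rewrite subrr normr0.
    by apply/andP; split; lra.
  - rewrite -HL ?HdW //; first by rewrite (addrC p) addrK gtr0_norm; lra.
    by apply/andP; split; lra.
rewrite {}k1W in HL.
have HFab : forall x, a <= x <= b -> F x = A W + x * W%:~R.
  move=> x /andP[x1 x2].
  have [xa|ax] := eqVneq x a.
    have ab0 : a < b by lra.
    by rewrite xa; apply: (touch_right Hg Hal ab0 Hbe HL).
  have [xb|bx] := eqVneq x b.
    have ab0 : a < b by lra.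
    by rewrite xb; apply: (touch_left Hg Hal ab0 Hbe HL).
  by apply: HL; apply/andP; split; rewrite lt_neqAle ?x1 ?x2 ?andbT // eq_sym.
have ab : a < b by lra.
have Oa : Omega al be a by apply/andP; split; lra.
have Ob : Omega al be b by apply/andP; split; lra.
have Fa : F a = A W + a * W%:~R by apply: HFab; apply/andP; split; lra.
have Fb : F b = A W + b * W%:~R by apply: HFab; apply/andP; split; lra.
have Fp : F p = A W + p * W%:~R by apply: HFab; apply/andP; split; lra.
have Kl := Kl_lem Hg Hfin Hal ab Hbe HFab Ha_ns.
have Kr := Kr_lem Hg Hfin Hal ab Hbe HFab Hb_ns.
have CA1 : A (W + 1) <= F a - (W%:~R + 1) * a.
  by apply: canon_ub => // z Oz; have := Kl z Oz; rewrite intrD1; lra.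
have CA2 : A (W - 1) <= F b - (W%:~R - 1) * b.
  by apply: canon_ub => // z Oz; have := Kr z Oz; rewrite intrM1; lra.
have HN := N_lem Hg Oa Ob ap pb Fa Fb Fp CA1 CA2.
have bbW : bb W = F p + c - p * W%:~R by rewrite /bb eqxx HN.
have bbv : forall v, v != W -> bb v = A v by move=> v vW; rewrite /bb (negbTE vW).
have Gv := Gval_lem Hg Hal ap pb Hbe HFab CA1 CA2 bbW bbv.
have HGval : forall z, Omega al be z -> G z = F z + tent a b c z.
  by move=> z Oz; rewrite HGz; apply: glb_inf; apply: Gv.
have HgG : glbrep al be G bb by move=> z Oz; rewrite HGval //; apply: Gv.
have [cl cr] := min_prop (p - a) (b - p).
have c0 : 0 < c by rewrite /c lt_min; apply/andP; split; lra.
have hc : a + c <= b - c by rewrite /c in cl cr *; lra.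
have [fin MFeq] := final_lem Hab Hg Hfin HgG HGval.
split; last exact: MFeq.
split; last exact: fin.
split.
  move=> z Oz; rewrite HGval //.
  have [/andP[T0 _] _ _ _ _] := tent_prop z c0 hc.
  have := F0 z Oz; lra.
have Oal : Omega al be al by apply/andP; split; lra.
have Obe : Omega al be be by apply/andP; split; lra.
split.
  rewrite HGval // Fal.
  have [_ T1 _ _ _] := tent_prop al c0 hc.
  by rewrite T1 ?addr0 //; left.
split.
  rewrite HGval // Fbe.
  have [_ T1 _ _ _] := tent_prop be c0 hc.
  by rewrite T1 ?addr0 //; right.
by exists bb.
Qed.
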